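(* Let $d,M\ge1$, let $\mathcal{X}$ be the set of (represented) graphs with at most $M$ nodes whose node embeddings lie in $\mathbb{R}^d$ with Euclidean norm at most $1$, let $\gamma>0$, let $p$ be a probability distribution over random graphs $G_\omega$, and let $G_{\omega_1},\dots,G_{\omega_R}$ be random graphs. Define $\phi_{G_\omega}(G)=\exp(-\gamma\,\mathrm{EMD}(G,G_\omega))$, $k(G_x,G_y)=\int p(G_\omega)\phi_{G_\omega}(G_x)\phi_{G_\omega}(G_y)\,dG_\omega$, $\tilde{k}(G_x,G_y)=\frac1R\sum_{i=1}^R\phi_{G_{\omega_i}}(G_x)\phi_{G_{\omega_i}}(G_y)$, and $\Delta_R(G_x,G_y)=k(G_x,G_y)-\tilde{k}(G_x,G_y)$. Let $t>0$ and let $\mathcal{E}$ be a $\frac{t}{4\gamma}$-covering of $\mathcal{X}$ with respect to $\mathrm{EMD}$ (i.e. for every $G\in\mathcal{X}$ there is $G'\in\mathcal{E}$ with $\mathrm{EMD}(G,G')\le \frac{t}{4\gamma}$). If $|\Delta_R(G_i,G_j)|\le t$ for all $G_i,G_j\in\mathcal{E}$, then $|\Delta_R(G_x,G_y)|\le 2t$ for all $G_x,G_y\in\mathcal{X}$.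
   Context: A graph $G$ with $n$ nodes is represented by node embeddings $\{\boldsymbol{u}_i\}_{i=1}^n\subset\mathbb{R}^d$ and a weight vector $\boldsymbol{t}^{(G)}\in\mathbb{R}^n_{\ge0}$ with entries summing to $1$. For graphs $G_x$ (embeddings $\boldsymbol{u}_i$, $n_x$ nodes) and $G_y$ (embeddings $\boldsymbol{v}_j$, $n_y$ nodes), $\mathrm{EMD}(G_x,G_y)=\min\{\langle\mathcal{D},\mathcal{T}\rangle : \mathcal{T}\in\mathbb{R}_{+}^{n_x\times n_y},\ \mathcal{T}\mathbf{1}=\boldsymbol{t}^{(G_x)},\ \mathcal{T}^T\mathbf{1}=\boldsymbol{t}^{(G_y)}\}$ with $\mathcal{D}_{ij}=\|\boldsymbol{u}_i-\boldsymbol{v}_j\|_2$; it is a metric. A random graph $G_\omega$ is a collection of $D\in\{1,\dots,D_{\max}\}$ node embedding vectors $\boldsymbol{w}_1,\dots,\boldsymbol{w}_D\in\mathbb{R}^d$ (with node weights summing to $1$), and $p$ is a probability distribution on the space $\bigcup_{D=1}^{D_{\max}}(\mathbb{R}^d)^D$ of such random graphs. *)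

(* Defs.v *)
From HB Require Import structures.
From mathcomp Require Import all_boot all_order all_algebra.
From mathcomp Require Import all_classical all_reals all_analysis.
Set Implicit Arguments. Unset Strict Implicit. Unset Printing Implicit Defensive.
Import Order.TTheory GRing.Theory Num.Theory.
Local Open Scope classical_set_scope.
Local Open Scope ring_scope.

Section Graphs.
Variables (R : realType) (d : nat).

Record graph := Graph {
  gsize : nat;
  gemb : 'I_gsize -> 'rV[R]_d;
  gwt : 'I_gsize -> R }.
Arguments gsize : clear implicits.
Arguments gemb : clear implicits.
Arguments gwt : clear implicits.

Definition wf_graph (G : graph) : Prop :=
  (forall i, 0 <= gwt G i) /\ \sum_i gwt G i = 1.

Definition enorm (v : 'rV[R]_d) : R := Num.sqrt (\sum_j v 0 j ^+ 2).

Definition transport_plans (Gx Gy : graph) : set 'M[R]_(gsize Gx, gsize Gy) :=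
  [set T | (forall i j, 0 <= T i j) /\
           (forall i, \sum_j T i j = gwt Gx i) /\
           (forall j, \sum_i T i j = gwt Gy j)].

Definition transport_cost (Gx Gy : graph) (T : 'M[R]_(gsize Gx, gsize Gy)) : R :=
  \sum_i \sum_j enorm (gemb Gx i - gemb Gy j) * T i j.

(* EMD = min over transport plans (attained; written as inf) *)
Definition EMD (Gx Gy : graph) : R :=
  inf (@transport_cost Gx Gy @` @transport_plans Gx Gy).

Definition phi (gamma : R) (Gw G : graph) : R := expR (- (gamma * EMD G Gw)).

Definition in_X (M : nat) (G : graph) : Prop :=
  wf_graph G /\ (gsize G <= M)%N /\ (forall i, enorm (gemb G i) <= 1).

End Graphs.

Definition kernel (R : realType) (d : nat) (dom : measure_display)
  (Om : measurableType dom) (P : probability Om R) (Gw : Om -> graph R d)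
  (gamma : R) (Gx Gy : graph R d) : R :=
  Rintegral P setT (fun w => phi gamma (Gw w) Gx * phi gamma (Gw w) Gy).

Definition kernel_approx (R : realType) (d : nat) (Rn : nat)
  (Gs : 'I_Rn -> graph R d) (gamma : R) (Gx Gy : graph R d) : R :=
  (Rn%:R)^-1 * \sum_(i < Rn) phi gamma (Gs i) Gx * phi gamma (Gs i) Gy.

Definition DeltaR (R : realType) (d : nat) (dom : measure_display)
  (Om : measurableType dom) (P : probability Om R) (Gw : Om -> graph R d)
  (Rn : nat) (ws : 'I_Rn -> Om) (gamma : R) (Gx Gy : graph R d) : R :=
  kernel P Gw gamma Gx Gy - kernel_approx (fun i => Gw (ws i)) gamma Gx Gy.

(* Main.v *)
Require Import Defs.
From HB Require Import structures.
From mathcomp Require Import all_boot all_order all_algebra.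
From mathcomp Require Import all_classical all_reals all_analysis.
From mathcomp Require Import ring lra.
Import Order.TTheory GRing.Theory Num.Theory.
Local Open Scope classical_set_scope.
Local Open Scope ring_scope.


Section Eucl.
Variables (R : realType) (d : nat).

Lemma CS (a b : 'I_d -> R) :
  (\sum_i a i * b i) ^+ 2 <= (\sum_i a i ^+ 2) * (\sum_i b i ^+ 2).
Proof.
have H : 0 <= \sum_i \sum_j (a i * b j - a j * b i) ^+ 2.
  by apply: sumr_ge0 => i _; apply: sumr_ge0 => j _; exact: sqr_ge0.
have E : \sum_i \sum_j (a i * b j - a j * b i) ^+ 2 =
   2 * ((\sum_i a i ^+ 2) * (\sum_i b i ^+ 2) - (\sum_i a i * b i) ^+ 2).
  have -> : \sum_i \sum_j (a i * b j - a j * b i) ^+ 2 =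
     \sum_i \sum_j (a i ^+ 2 * b j ^+ 2) + \sum_i \sum_j (a j ^+ 2 * b i ^+ 2)
     - 2 * \sum_i \sum_j (a i * b i) * (a j * b j).
    rewrite -!big_split /= mulr_sumr -sumrB; apply: eq_bigr => i _.
    rewrite -!big_split /= mulr_sumr -sumrB; apply: eq_bigr => j _.
    ring.
  have P1 : \sum_i \sum_j (a i ^+ 2 * b j ^+ 2) = (\sum_i a i ^+ 2) * (\sum_i b i ^+ 2).
    by rewrite mulr_suml; apply: eq_bigr => i _; rewrite mulr_sumr.
  have P2 : \sum_i \sum_j (a j ^+ 2 * b i ^+ 2) = (\sum_i a i ^+ 2) * (\sum_i b i ^+ 2).
    by rewrite exchange_big P1.
  have P3 : \sum_i \sum_j (a i * b i) * (a j * b j) = (\sum_i a i * b i) ^+ 2.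
    by rewrite expr2 mulr_suml; apply: eq_bigr => i _; rewrite mulr_sumr.
  rewrite P1 P2 P3; ring.
rewrite E in H; rewrite -subr_ge0; lra.
Qed.

Lemma enormD (u v : 'rV[R]_d) : enorm (u + v) <= enorm u + enorm v.
Proof.
rewrite /enorm.
set su := \sum_j u 0 j ^+ 2; set sv := \sum_j v 0 j ^+ 2.
have su0 : 0 <= su by apply: sumr_ge0 => j _; exact: sqr_ge0.
have sv0 : 0 <= sv by apply: sumr_ge0 => j _; exact: sqr_ge0.
have cs : \sum_j u 0 j * v 0 j <= Num.sqrt su * Num.sqrt sv.
  rewrite -sqrtrM // (le_trans (ler_norm _)) //.
  rewrite -sqrtr_sqr; apply: ler_wsqrtr; exact: CS.
have -> : \sum_j (u + v) 0 j ^+ 2 = su + sv + 2 * \sum_j u 0 j * v 0 j.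
  rewrite /su /sv mulr_sumr -!big_split /=; apply: eq_bigr => j _.
  rewrite mxE; ring.
have e : Num.sqrt su + Num.sqrt sv = Num.sqrt ((Num.sqrt su + Num.sqrt sv) ^+ 2).
  by rewrite sqrtr_sqr ger0_norm // addr_ge0 // sqrtr_ge0.
rewrite [X in _ <= X]e; apply: ler_wsqrtr.
rewrite sqrrD !sqr_sqrtr //; lra.
Qed.

Lemma enormN (u : 'rV[R]_d) : enorm (- u) = enorm u.
Proof. by rewrite /enorm; congr Num.sqrt; apply: eq_bigr => j _; rewrite mxE sqrrN. Qed.

Lemma enorm_tri (a b c : 'rV[R]_d) : enorm (b - c) <= enorm (a - b) + enorm (a - c).
Proof.
have -> : b - c = - (a - b) + (a - c) by rewrite opprB addrA subrK.
by rewrite (le_trans (enormD _ _)) // enormN.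
Qed.

Lemma enorm_ge0 (u : 'rV[R]_d) : 0 <= enorm u.
Proof. exact: sqrtr_ge0. Qed.

Lemma enormC (u v : 'rV[R]_d) : enorm (u - v) = enorm (v - u).
Proof. by rewrite -enormN opprB. Qed.

Implicit Types (A B C : graph R d).

Lemma plan_zero A B (T : 'M[R]_(gsize A, gsize B)) :
  @transport_plans _ _ A B T -> forall i j, T i j * @gwt _ _ A i / @gwt _ _ A i = T i j.
Proof.
move=> [h0 [hr hc]] i j.
have [e|nz] := eqVneq (@gwt _ _ A i) 0; last by rewrite mulfK.
rewrite e mulr0 mul0r; apply/esym.
have := psumr_eq0P (P := xpredT) (F := fun j => T i j) (fun j _ => h0 i j).
by rewrite hr e => /(_ erefl j isT).
Qed.

Lemma plan_zero' A B (T : 'M[R]_(gsize A, gsize B)) :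
  @transport_plans _ _ A B T -> forall i j, @gwt _ _ A i * T i j / @gwt _ _ A i = T i j.
Proof. by move=> hT i j; rewrite [@gwt _ _ A i * _]mulrC plan_zero. Qed.

Lemma cost_ge0 A B (T : 'M[R]_(gsize A, gsize B)) :
  @transport_plans _ _ A B T -> 0 <= transport_cost T.
Proof.
move=> [h0 _]; apply: sumr_ge0 => i _; apply: sumr_ge0 => j _.
by rewrite mulr_ge0 // enorm_ge0.
Qed.

Lemma plans_nonempty A B : wf_graph A -> wf_graph B ->
  exists T, @transport_plans _ _ A B T.
Proof.
move=> [a0 a1] [b0 b1].
exists (\matrix_(i, j) (@gwt _ _ A i * @gwt _ _ B j)); split; [|split].
- by move=> i j; rewrite mxE mulr_ge0.
- move=> i; under eq_bigr do rewrite mxE.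
  by rewrite -mulr_sumr b1 mulr1.
- move=> j; under eq_bigr do rewrite mxE.
  by rewrite -mulr_suml a1 mul1r.
Qed.

Arguments plans_nonempty {A B}.

Lemma EMD_le_cost A B (T : 'M[R]_(gsize A, gsize B)) :
  @transport_plans _ _ A B T -> EMD A B <= transport_cost T.
Proof.
move=> hT; rewrite /EMD; apply: ge_inf; last by exists T.
exists 0 => _ [T' hT' <-]; exact: cost_ge0.
Qed.

Arguments EMD_le_cost {A B T}.
Arguments cost_ge0 {A B T}.

Lemma EMD_ge0 A B : wf_graph A -> wf_graph B -> 0 <= EMD A B.
Proof.
move=> wa wb; have [T hT] := plans_nonempty wa wb.
rewrite /EMD; apply: lb_le_inf; first by exists (transport_cost T), T.
move=> _ [T' hT' <-]; exact: cost_ge0.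
Qed.

Lemma EMD_le_add A B A' B' (X : R) : wf_graph A -> wf_graph B ->
  wf_graph A' -> wf_graph B' ->
  (forall T1 T2, @transport_plans _ _ A B T1 -> @transport_plans _ _ A' B' T2 ->
     X <= transport_cost T1 + transport_cost T2) ->
  X <= EMD A B + EMD A' B'.
Proof.
move=> wa wb wa' wb' H.
have [T1 h1] := plans_nonempty wa wb.
have [T2 h2] := plans_nonempty wa' wb'.
rewrite -lerBlDr /EMD; apply: lb_le_inf; first by exists (transport_cost T1), T1.
move=> _ [T hT <-]; rewrite lerBlDl addrC -lerBlDl.
apply: lb_le_inf; first by exists (transport_cost T2), T2.
move=> _ [T' hT' <-]; rewrite lerBlDl; exact: H.
Qed.

Arguments plan_zero {A B T}.
Arguments plan_zero' {A B T}.

Lemma glue A B C (T1 : 'M[R]_(gsize A, gsize B)) (T2 : 'M[R]_(gsize A, gsize C)) :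
  @transport_plans _ _ A B T1 -> @transport_plans _ _ A C T2 ->
  EMD B C <= transport_cost T1 + transport_cost T2.
Proof.
move=> h1 h2.
have k1 := plan_zero h1; have k2 := plan_zero h2.
have k1' := plan_zero' h1; have k2' := plan_zero' h2.
case: (h1) => [p1 [r1 c1]]; case: (h2) => [p2 [r2 c2]].
pose T := \matrix_(j, k) \sum_i T1 i j * T2 i k / @gwt _ _ A i.
have ea : forall i, 0 <= @gwt _ _ A i.
  by move=> i; rewrite -(r1 i); apply: sumr_ge0 => j _.
have rowT : forall i j, \sum_k T1 i j * T2 i k / @gwt _ _ A i = T1 i j.
  by move=> i j; rewrite -mulr_suml -mulr_sumr r2 k1.
have colT : forall i k, \sum_j T1 i j * T2 i k / @gwt _ _ A i = T2 i k.
  by move=> i k; rewrite -mulr_suml -mulr_suml r1 k2'.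
have hT : @transport_plans _ _ B C T.
  split; [|split].
  - move=> j k; rewrite mxE; apply: sumr_ge0 => i _.
    by rewrite divr_ge0 // mulr_ge0.
  - move=> j; under eq_bigr do rewrite mxE.
    rewrite exchange_big /= -c1; apply: eq_bigr => i _.
    by rewrite -mulr_suml -mulr_sumr r2 k1.
  - move=> k; under eq_bigr do rewrite mxE.
    rewrite exchange_big /= -c2; apply: eq_bigr => i _.
    by rewrite -mulr_suml -mulr_suml r1 k2'.
apply: (le_trans (EMD_le_cost hT)).
rewrite /transport_cost.
pose w i j k := T1 i j * T2 i k / @gwt _ _ A i.
have w0 : forall i j k, 0 <= w i j k by move=> i j k; rewrite divr_ge0 // mulr_ge0.
apply: (@le_trans _ _ (\sum_j \sum_k \sum_i
   (enorm (@gemb _ _ A i - @gemb _ _ B j) * w i j k + enorm (@gemb _ _ A i - @gemb _ _ C k) * w i j k))).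
  apply: ler_sum => j _; apply: ler_sum => k _; rewrite mxE mulr_sumr.
  apply: ler_sum => i _; rewrite -mulrDl; apply: ler_wpM2r; [exact: w0 | exact: enorm_tri].
have -> : \sum_j \sum_k \sum_i
   (enorm (@gemb _ _ A i - @gemb _ _ B j) * w i j k + enorm (@gemb _ _ A i - @gemb _ _ C k) * w i j k)
  = \sum_j \sum_i \sum_k enorm (@gemb _ _ A i - @gemb _ _ B j) * w i j k +
    \sum_k \sum_i \sum_j enorm (@gemb _ _ A i - @gemb _ _ C k) * w i j k.
  transitivity (\sum_j \sum_k \sum_i enorm (@gemb _ _ A i - @gemb _ _ B j) * w i j k +
    \sum_j \sum_k \sum_i enorm (@gemb _ _ A i - @gemb _ _ C k) * w i j k).
    rewrite -big_split; apply: eq_bigr => j _; rewrite -big_split.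
    by apply: eq_bigr => k _; rewrite -big_split.
  congr (_ + _); last first.
    by rewrite exchange_big; apply: eq_bigr => k _; exact: exchange_big.
  by apply: eq_bigr => j _; exact: exchange_big.
rewrite [X in X + _ <= _]exchange_big [X in _ + X <= _]exchange_big /=.
rewrite le_eqVlt; apply/orP; left; apply/eqP.
congr (_ + _); apply: eq_bigr => i _; apply: eq_bigr => j _;
  by rewrite -mulr_sumr ?rowT ?colT.
Qed.
End Eucl.
Lemma bnd_integrable (R : realType) (dom : measure_display) (Om : measurableType dom)
  (P : probability Om R) (f : Om -> R) (c : R) :
  measurable_fun setT f -> (forall w, `|f w| <= c) -> P.-integrable setT (EFin \o f).
Proof.
move=> mf hb; apply: measurable_bounded_integrable => //.
  by have := probability_setT P; rewrite /= => ->; rewrite ltry.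
rewrite /bounded_near; near=> M.
move=> w _ /=; apply: (le_trans (hb w)); near: M; apply: nbhs_pinfty_ge; exact: num_real.
Unshelve. all: end_near. Qed.

Arguments bnd_integrable {R dom Om} P {f c}.

Lemma int_diff (R : realType) (dom : measure_display) (Om : measurableType dom)
  (P : probability Om R) (f g : Om -> R) (b c : R) :
  measurable_fun setT f -> measurable_fun setT g ->
  (forall w, `|f w| <= b) -> (forall w, `|g w| <= b) ->
  (forall w, `|f w - g w| <= c) ->
  `|Rintegral P setT f - Rintegral P setT g| <= c.
Proof.
move=> mf mg bf bg hc.
have If := bnd_integrable P mf bf; have Ig := bnd_integrable P mg bg.
have mfg : measurable_fun setT (fun w => f w - g w) by exact: measurable_realfun.measurable_funB.
have Ifg := bnd_integrable P mfg hc.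
rewrite -RintegralB //.
apply: (le_trans (le_normr_Rintegral _ Ifg)) => //.
have -> : c = Rintegral P setT (fun _ => c).
  by rewrite Rintegral_cst //; have := probability_setT P; move=> /= ->; rewrite /= mulr1.
apply: le_Rintegral => //.
- apply: (bnd_integrable P (c := c)); first exact: measurableT_comp.
  by move=> w; rewrite normr_id.
- apply: (bnd_integrable P (c := `|c|)) => //.
Qed.

Section Lip.
Variable R : realType.

Lemma expR_lip (u v : R) : u <= 0 -> v <= 0 -> `|expR u - expR v| <= `|u - v|.
Proof.
wlog: u v / u <= v.
  move=> H hu hv; have [uv|vu] := leP u v; first exact: H.
  by rewrite distrC [`|u - v|]distrC; apply: H => //; exact: ltW.
move=> uv hu hv.
have e : expR u = expR v * expR (u - v) by rewrite -expRD addrC subrK.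
have E1 : expR (u - v) <= 1 by rewrite expR_le1 subr_le0.
have E2 := expR_ge1Dx (u - v).
have ev1 : expR v <= 1 by rewrite expR_le1.
have ev0 := expR_ge0 v.
have -> : `|expR u - expR v| = expR v - expR u.
  by rewrite distrC ger0_norm // subr_ge0 ler_expR.
have -> : `|u - v| = v - u by rewrite distrC ger0_norm // subr_ge0.
rewrite e; nra.
Qed.

Lemma prod_lip (a b c e : R) : 0 <= b <= 1 -> 0 <= c <= 1 ->
  `|a * b - c * e| <= `|a - c| + `|b - e|.
Proof.
move=> /andP[b0 b1] /andP[c0 c1].
have -> : a * b - c * e = (a - c) * b + c * (b - e) by ring.
apply: (le_trans (ler_normD _ _)); apply: lerD; rewrite normrM.
- rewrite (ger0_norm b0); have := normr_ge0 (a - c); nra.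
- rewrite (ger0_norm c0); have := normr_ge0 (b - e); nra.
Qed.
End Lip.

Arguments glue {R d A B C T1 T2}.
Arguments EMD_le_add {R d A B A' B' X}.
Arguments EMD_ge0 {R d A B}.

Section Main.
Variables (R : realType) (d : nat).
Implicit Types (A B C : graph R d).

Lemma plan_tr A B (T : 'M[R]_(gsize A, gsize B)) :
  @transport_plans _ _ A B T -> @transport_plans _ _ B A T^T.
Proof.
move=> [h0 [hr hc]]; split; [|split].
- by move=> i j; rewrite mxE.
- by move=> j; under eq_bigr do rewrite mxE; exact: hc.
- by move=> i; under eq_bigr do rewrite mxE; exact: hr.
Qed.

Lemma cost_tr A B (T : 'M[R]_(gsize A, gsize B)) :
  transport_cost T^T = transport_cost T.
Proof.
rewrite /transport_cost exchange_big /=; apply: eq_bigr => i _.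
by apply: eq_bigr => j _; rewrite mxE enormC.
Qed.

Lemma EMD_lip (x i W : graph R d) : wf_graph x -> wf_graph i -> wf_graph W ->
  `|EMD x W - EMD i W| <= EMD x i.
Proof.
move=> wx wi wW.
have h1 : EMD i W <= EMD x i + EMD x W.
  apply: (EMD_le_add wx wi wx wW) => T1 T2 p1 p2. exact (glue p1 p2).
have h2 : EMD x W <= EMD x i + EMD i W.
  apply: (EMD_le_add wx wi wi wW) => T1 T2 p1 p2.
  by rewrite -cost_tr; exact (glue (@plan_tr _ _ _ p1) p2).
by rewrite ler_norml; apply/andP; split; lra.
Qed.

Lemma phi_bnd (g : R) (W x : graph R d) : 0 < g -> wf_graph x -> wf_graph W ->
  0 <= phi g W x <= 1.
Proof.
move=> hg wx wW; rewrite /phi expR_ge0 /= expR_le1 oppr_le0.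
exact: (mulr_ge0 (ltW hg) (EMD_ge0 wx wW)).
Qed.

Lemma phi_lip (g : R) (W x i : graph R d) : 0 < g -> wf_graph x -> wf_graph i -> wf_graph W ->
  `|phi g W x - phi g W i| <= g * EMD x i.
Proof.
move=> hg wx wi wW; rewrite /phi.
apply: (le_trans (@expR_lip _ _ _ _ _)).
- by rewrite oppr_le0; exact: (mulr_ge0 (ltW hg) (EMD_ge0 wx wW)).
- by rewrite oppr_le0; exact: (mulr_ge0 (ltW hg) (EMD_ge0 wi wW)).
rewrite opprK addrC -mulrBr normrM (gtr0_norm hg) distrC.
by apply: ler_wpM2l; [exact: ltW | exact: EMD_lip].
Qed.

Lemma prod_phi_lip (g : R) (W x y i j : graph R d) : 0 < g -> wf_graph x -> wf_graph y ->
  wf_graph i -> wf_graph j -> wf_graph W ->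
  `|phi g W x * phi g W y - phi g W i * phi g W j| <= g * EMD x i + g * EMD y j.
Proof.
move=> hg wx wy wi wj wW.
apply: (le_trans (@prod_lip _ _ _ _ _ (phi_bnd _ _ _ hg wy wW) (phi_bnd _ _ _ hg wi wW))).
by apply: lerD; exact: phi_lip.
Qed.
End Main.

Lemma tri3 (R : realType) (A B C D p q r : R) :
  `|A - C| <= p -> `|B - D| <= q -> `|C - D| <= r -> `|A - B| <= p + q + r.
Proof.
rewrite !ler_norml => /andP[h1 h2] /andP[h3 h4] /andP[h5 h6].
by apply/andP; split; lra.
Qed.

Theorem proposition4p2 (R : realType) (d M Dmax : nat)
  (hd : (0 < d)%N) (hM : (0 < M)%N)
  (dom : measure_display) (Om : measurableType dom) (P : probability Om R)
  (Gw : Om -> graph R d)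
  (hGw : forall w, wf_graph (Gw w) /\ (1 <= gsize (Gw w) <= Dmax)%N)
  (hmeas : forall G : graph R d, measurable_fun setT (fun w => EMD G (Gw w)))
  (gamma : R) (hgamma : 0 < gamma)
  (Rn : nat) (ws : 'I_Rn -> Om)
  (t : R) (ht : 0 < t)
  (E : set (graph R d)) (hEwf : forall G, E G -> wf_graph G)
  (hcov : forall G, in_X M G -> exists2 G', E G' & EMD G G' <= t / (4 * gamma))
  (hE : forall Gi Gj, E Gi -> E Gj -> `|DeltaR P Gw ws gamma Gi Gj| <= t) :
  forall Gx Gy, in_X M Gx -> in_X M Gy -> `|DeltaR P Gw ws gamma Gx Gy| <= 2 * t.
Proof.
move=> Gx Gy hx hy.
have wx := hx.1; have wy := hy.1.
have [Gi Ei hi] := hcov Gx hx; have [Gj Ej hj] := hcov Gy hy.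
have wi := hEwf _ Ei; have wj := hEwf _ Ej.
have wW : forall w, wf_graph (Gw w) := fun w => (hGw w).1.
have cov : forall (G G' : graph R d), EMD G G' <= t / (4 * gamma) ->
    gamma * EMD G G' <= t / 4.
  move=> G G' h; apply: (le_trans (ler_wpM2l (ltW hgamma) h)).
  rewrite le_eqVlt; apply/orP; left; apply/eqP; field.
  by rewrite gt_eqF.
have hpt : forall W, wf_graph W ->
    `|phi gamma W Gx * phi gamma W Gy - phi gamma W Gi * phi gamma W Gj| <= t / 2.
  move=> W wWW.
  apply: (le_trans (prod_phi_lip _ _ _ _ _ _ _ _ hgamma wx wy wi wj wWW)).
  have := cov _ _ hi; have := cov _ _ hj; lra.
have mphi : forall G, measurable_fun setT (fun w => phi gamma (Gw w) G).
  move=> G.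
  have -> : (fun w => phi gamma (Gw w) G) =
      expR \o (( *%R^~ (- gamma)) \o (fun w => EMD G (Gw w))).
    apply: boolp.funext => w; rewrite /phi /=; congr (expR _); ring.
  exact: (measurableT_comp (@measurable_realfun.measurable_expR R)
    (measurableT_comp (measurable_realfun.mulrr_measurable _) (hmeas G))).
have bphi : forall G, wf_graph G -> forall w,
    `|phi gamma (Gw w) G * phi gamma (Gw w) G| <= 1 * 1.
  move=> G wG w; have /andP[h0 h1] := phi_bnd _ _ _ _ _ hgamma wG (wW w).
  rewrite normrM ger0_norm //; apply: ler_pM => //.
have hk : `|Defs.kernel P Gw gamma Gx Gy - Defs.kernel P Gw gamma Gi Gj| <= t / 2.
  apply: (@int_diff _ _ _ P _ _ 1).
  - exact: measurable_realfun.measurable_funM.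
  - exact: measurable_realfun.measurable_funM.
  - move=> w; have /andP[a0 a1] := phi_bnd _ _ _ _ _ hgamma wx (wW w).
    have /andP[b0 b1] := phi_bnd _ _ _ _ _ hgamma wy (wW w).
    rewrite normrM !ger0_norm //; nra.
  - move=> w; have /andP[a0 a1] := phi_bnd _ _ _ _ _ hgamma wi (wW w).
    have /andP[b0 b1] := phi_bnd _ _ _ _ _ hgamma wj (wW w).
    rewrite normrM !ger0_norm //; nra.
  - move=> w; exact: hpt.
have hka : `|kernel_approx (fun k => Gw (ws k)) gamma Gx Gy -
             kernel_approx (fun k => Gw (ws k)) gamma Gi Gj| <= t / 2.
  rewrite /kernel_approx -mulrBr -sumrB normrM.
  have [Rn0|Rpos] := eqVneq Rn 0%N.
    subst Rn; rewrite big_ord0 normr0 mulr0; lra.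
  have hs : `|\sum_(k < Rn) (phi gamma (Gw (ws k)) Gx * phi gamma (Gw (ws k)) Gy -
        phi gamma (Gw (ws k)) Gi * phi gamma (Gw (ws k)) Gj)| <= Rn%:R * (t / 2).
    apply: (le_trans (ler_norm_sum _ _ _)).
    apply: (@le_trans _ _ (\sum_(k < Rn) (t / 2))).
      by apply: ler_sum => k _; exact: hpt.
    by rewrite sumr_const card_ord mulr_natl.
  apply: (le_trans (ler_wpM2l (normr_ge0 _) hs)).
  by rewrite ger0_norm ?invr_ge0 // mulKf // pnatr_eq0.
have := hE _ _ Ei Ej; rewrite /DeltaR => hij.
have := tri3 _ _ _ _ _ _ _ _ hk hka hij; lra.
Qed.
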